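(* Let $M\subset AG_k(n)$ be the set of fibers of a skew fibration of $\mathbb R^n$ by oriented affine $k$-planes. Then $M$ is topologically closed in $AG_k(n)$. Moreover, if $(u_n,v_n)\in M$ is a sequence with no accumulation point in $M$, then $|v_n|\to\infty$.
   Context: $AG_k(n)$ is the manifold of oriented affine $k$-planes in $\mathbb R^n$; a plane is written as $(u,v)$ where $u$ is the parallel oriented linear $k$-plane and $v\in u^\perp$ is the point of the plane nearest to the origin. A fibration of $\mathbb R^n$ by oriented affine $k$-planes is a family of pairwise disjoint oriented affine $k$-planes covering $\mathbb R^n$ such that the map sending a point to its fiber is continuous; it is skew if no two distinct fibers contain parallel lines. *)

(* Defs.v *)
From HB Require Import structures.
From mathcomp Require Import all_boot all_order all_algebra.
From mathcomp Require Import reals.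
Set Implicit Arguments. Unset Strict Implicit. Unset Printing Implicit Defensive.
Import Order.TTheory GRing.Theory Num.Theory.
Local Open Scope ring_scope.

Section AG.
Variables (R : realType) (n k : nat).

Definition sqnorm (v : 'rV[R]_n) : R := \sum_(i < n) v ord0 i ^+ 2.
Definition frob2 (A : 'M[R]_(k, n)) : R := \sum_(i < k) \sum_(j < n) A i j ^+ 2.

(* A representative (F, v) of an oriented affine k-plane (u, v):
   the rows of F form a positively oriented orthonormal basis of u,
   and v is in u^perp. *)
Definition aplane := ('M[R]_(k, n) * 'rV[R]_n)%type.

Definition valid_plane (P : aplane) : Prop :=
  P.1 *m P.1^T = 1%:M /\ P.2 *m P.1^T = 0.

Definition pts (P : aplane) (x : 'rV[R]_n) : Prop :=
  exists y : 'rV[R]_k, x = P.2 + y *m P.1.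

Definition SOk (Q : 'M[R]_k) : Prop := Q *m Q^T = 1%:M /\ \det Q = 1.

Definition same_oplane (P P' : aplane) : Prop :=
  P'.2 = P.2 /\ exists Q, SOk Q /\ P'.1 = Q *m P.1.

(* basic neighbourhoods of the topology of AG_k(n): quotient metric
   min_{Q in SO(k)} |F - Q F'|_Frob on the oriented Grassmannian, plus |v - v'| *)
Definition ag_near (e : R) (P P' : aplane) : Prop :=
  exists Q, SOk Q /\ frob2 (P.1 - Q *m P'.1) < e /\ sqnorm (P.2 - P'.2) < e.

(* f sends a point to (a representative of) its fiber *)
Definition is_fibration (f : 'rV[R]_n -> aplane) : Prop :=
  (forall x, valid_plane (f x) /\ pts (f x) x) /\
  (forall x y, (exists z, pts (f x) z /\ pts (f y) z) -> same_oplane (f x) (f y)) /\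
  (forall x e, 0 < e -> exists2 d, 0 < d &
     forall y, sqnorm (y - x) < d -> ag_near e (f x) (f y)).

Definition skew_fibration (f : 'rV[R]_n -> aplane) : Prop :=
  forall x y, ~ same_oplane (f x) (f y) ->
  forall w : 'rV[R]_n, (w <= (f x).1)%MS -> (w <= (f y).1)%MS -> w = 0.

(* the set M of fibers, as a (saturated) set of representatives *)
Definition fibers (f : 'rV[R]_n -> aplane) (P : aplane) : Prop :=
  valid_plane P /\ exists x, same_oplane (f x) P.

Definition ag_closed (S : aplane -> Prop) : Prop :=
  forall P, valid_plane P ->
  (forall e, 0 < e -> exists P', S P' /\ ag_near e P P') -> S P.

Definition ag_accum (s : nat -> aplane) (P : aplane) : Prop :=
  forall e, 0 < e -> forall N, exists m, (N <= m)%N /\ ag_near e P (s m).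

End AG.

(* Main.v *)
Require Import Defs.
From HB Require Import structures.
From mathcomp Require Import all_boot all_order all_algebra.
From mathcomp Require Import reals.
From mathcomp Require Import ring lra.
From mathcomp Require all_classical all_analysis.
From Stdlib Require Import Classical.
Set Implicit Arguments. Unset Strict Implicit. Unset Printing Implicit Defensive.
Import Order.TTheory GRing.Theory Num.Theory.
Local Open Scope ring_scope.

Section Alg.
Variable R : realType.

Definition fr2 p q (A : 'M[R]_(p, q)) : R := \sum_(i < p) \sum_(j < q) A i j ^+ 2.

Lemma fr2_tr p q (A : 'M[R]_(p, q)) : fr2 A = \tr (A *m A^T).
Proof.
rewrite /fr2 /mxtrace; apply: eq_bigr => i _; rewrite mxE.
by apply: eq_bigr => j _; rewrite mxE expr2.
Qed.

Lemma fr2_ge0 p q (A : 'M[R]_(p, q)) : 0 <= fr2 A.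
Proof. by apply: sumr_ge0 => i _; apply: sumr_ge0 => j _; apply: sqr_ge0. Qed.

Lemma fr2_eq0 p q (A : 'M[R]_(p, q)) : fr2 A = 0 -> A = 0.
Proof.
move=> /eqP; rewrite psumr_eq0; last by move=> i _; apply: sumr_ge0 => j _; apply: sqr_ge0.
move=> /allP H; apply/matrixP => i j; rewrite mxE.
have /implyP/(_ isT) := H i (mem_index_enum _).
rewrite psumr_eq0; last by move=> ? _; apply: sqr_ge0.
move=> /allP/(_ j (mem_index_enum _)) /implyP /(_ isT).
by rewrite sqrf_eq0 => /eqP.
Qed.

Lemma fr2_trmx p q (A : 'M[R]_(p, q)) : fr2 A^T = fr2 A.
Proof. rewrite /fr2 exchange_big; apply: eq_bigr => i _; apply: eq_bigr => j _; by rewrite mxE. Qed.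

Lemma fr2N p q (A : 'M[R]_(p, q)) : fr2 (- A) = fr2 A.
Proof. rewrite /fr2; apply: eq_bigr => i _; apply: eq_bigr => j _; by rewrite mxE sqrrN. Qed.

Lemma fr2Z p q c (A : 'M[R]_(p, q)) : fr2 (c *: A) = c ^+ 2 * fr2 A.
Proof.
rewrite /fr2 mulr_sumr; apply: eq_bigr => i _; rewrite mulr_sumr.
by apply: eq_bigr => j _; rewrite mxE exprMn.
Qed.

Lemma fr2D p q (A B : 'M[R]_(p, q)) : fr2 (A + B) <= 2 * fr2 A + 2 * fr2 B.
Proof.
rewrite /fr2 !mulr_sumr -big_split /=; apply: ler_sum => i _.
rewrite !mulr_sumr -big_split /=; apply: ler_sum => j _.
rewrite mxE; have := sqr_ge0 (A i j - B i j); nra.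
Qed.

Lemma fr2_mulr p q r (X : 'M[R]_(p, r)) (F : 'M[R]_(r, q)) :
  F *m F^T = 1%:M -> fr2 (X *m F) = fr2 X.
Proof.
move=> HF; rewrite !fr2_tr trmx_mul mulmxA -(mulmxA X) HF mulmx1 //.
Qed.

Lemma fr2_mull p q (Q : 'M[R]_p) (A : 'M[R]_(p, q)) :
  Q *m Q^T = 1%:M -> fr2 (Q *m A) = fr2 A.
Proof.
move=> HQ; rewrite !fr2_tr trmx_mul mulmxA mxtrace_mulC !mulmxA.
by rewrite (mulmx1C HQ) mul1mx.
Qed.

Lemma bessel p q r (A : 'M[R]_(p, q)) (F : 'M[R]_(r, q)) :
  F *m F^T = 1%:M -> fr2 (A *m F^T) <= fr2 A.
Proof.
move=> HF.
have := fr2_ge0 (A - A *m F^T *m F).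
rewrite fr2_tr linearB /= trmx_mul trmx_mul trmxK mulmxBl !mulmxBr.
have E : A *m F^T *m F *m (F^T *m (F *m A^T)) = A *m F^T *m F *m A^T.
  by rewrite !mulmxA -(mulmxA _ F F^T) HF mulmx1.
rewrite E subrr subr0 raddfB /= subr_ge0.
by rewrite !fr2_tr trmx_mul trmxK !mulmxA.
Qed.


Lemma SOk1 p : SOk (1%:M : 'M[R]_p).
Proof. by split; rewrite ?trmx1 ?mulmx1 ?det1. Qed.

Lemma SOkM p (Q1 Q2 : 'M[R]_p) : SOk Q1 -> SOk Q2 -> SOk (Q1 *m Q2).
Proof.
move=> [H1 D1] [H2 D2]; split; last by rewrite det_mulmx D1 D2 mulr1.
by rewrite trmx_mul mulmxA -(mulmxA Q1) H2 mulmx1.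
Qed.

Lemma SOkT p (Q : 'M[R]_p) : SOk Q -> SOk Q^T.
Proof. by move=> [H D]; split; rewrite ?det_tr // trmxK; apply: mulmx1C. Qed.

Lemma rV_mul_tr p (u : 'rV[R]_p) : u *m u^T = (fr2 u)%:M.
Proof.
apply/matrixP => i j; rewrite !ord1 !mxE eqxx mulr1n /fr2 big_ord1.
by apply: eq_bigr => l _; rewrite mxE expr2.
Qed.

Lemma small_le0 (x : R) : (forall e, 0 < e -> exists2 a, x <= 4 * a & a < e) -> x <= 0.
Proof.
move=> H; rewrite leNgt; apply/negP => x0.
have [a h1 h2] := H (x / 8) ltac:(by apply: divr_gt0).
lra.
Qed.

Lemma sep p q (F G : 'M[R]_(p, q)) : F *m F^T = 1%:M -> G *m G^T = 1%:M ->
  (forall e, 0 < e -> exists Q, SOk Q /\ fr2 (G - Q *m F) < e) ->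
  exists Q, SOk Q /\ G = Q *m F.
Proof.
move=> HF HG H.
set Q0 := G *m F^T.
have key : forall Q : 'M[R]_p, Q *m Q^T = 1%:M ->
    fr2 (Q - Q0) <= fr2 (G - Q *m F) /\ fr2 (G - Q0 *m F) <= 4 * fr2 (G - Q *m F).
  move=> Q HQ.
  have E1 : Q - Q0 = (Q *m F - G) *m F^T by rewrite mulmxBl -mulmxA HF mulmx1.
  have L1 : fr2 (Q - Q0) <= fr2 (G - Q *m F).
    by rewrite E1 -[G - _]opprB fr2N; apply: bessel.
  split => //.
  have E2 : G - Q0 *m F = (G - Q *m F) + (Q - Q0) *m F.
    by rewrite mulmxBl addrA subrK.
  rewrite E2; apply: le_trans (fr2D _ _) _; rewrite fr2_mulr //; lra.
have Z : G = Q0 *m F.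
  apply/eqP; rewrite -subr_eq0; apply/eqP; apply: fr2_eq0.
  apply/eqP; rewrite eq_le fr2_ge0 andbT; apply: small_le0 => e e0.
  have [Q [[HQ _] HQe]] := H e e0.
  by exists (fr2 (G - Q *m F)) => //; case: (key Q HQ).
have HQ0 : Q0 *m Q0^T = 1%:M.
  by move: HG; rewrite {1 2}Z trmx_mul mulmxA -(mulmxA Q0) HF mulmx1.
exists Q0; split => //; split => //.
have [Q [[HQ DQ] HQe]] := H 1 ltr01.
have [L1 _] := key Q HQ.
have D2 : \det Q0 ^+ 2 = 1.
  by rewrite expr2 -{2}det_tr -det_mulmx HQ0 det1.
move/eqP: D2; rewrite sqrf_eq1 => /orP [/eqP //|/eqP Dm].
exfalso.
have Dsum : \det (Q + Q0) = 0.
  have E : Q^T *m (Q + Q0) *m Q0^T = (Q + Q0)^T.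
    rewrite mulmxDr mulmxDl (mulmx1C HQ) mul1mx -mulmxA HQ0 mulmx1.
    by rewrite linearD /= addrC.
  have := congr1 (@determinant _ _) E.
  rewrite !det_mulmx !det_tr DQ Dm; lra.
have /det0P [w w0 Hw] : \det (Q + Q0) == 0 by rewrite Dsum.
have c0 : 0 < fr2 w.
  rewrite lt_neqAle fr2_ge0 andbT eq_sym; apply/eqP => /fr2_eq0 /eqP.
  by rewrite (negbTE w0).
set u := (Num.sqrt (fr2 w))^-1 *: w.
have fu : fr2 u = 1.
  rewrite /u fr2Z exprVn sqr_sqrtr ?mulVf //; [exact: lt0r_neq0 | exact: ltW].
have Hu : u *m u^T = 1%:M by rewrite rV_mul_tr fu.
have Hu2 : u *m Q0 = - (u *m Q).
  apply/eqP; rewrite -addr_eq0 addrC -mulmxDr /u -scalemxAl Hw scaler0 //.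
have := bessel (Q - Q0)^T Hu.
rewrite -trmx_mul !fr2_trmx mulmxBr Hu2 opprK.
rewrite -[u *m Q + u *m Q]/((u *m Q) *+ 2) -scaler_nat fr2Z fr2_mulr // fu.
lra.
Qed.

End Alg.

Module BWm.
Import boolp classical_sets topology normedtype.
Import numFieldTopology.Exports numFieldNormedType.Exports.
Local Open Scope classical_set_scope.
Local Open Scope ring_scope.

Lemma BW (R : realType) (n : nat) (u : nat -> 'rV[R]_n) (B : R) :
  (forall N, exists m, (N <= m)%N /\ \sum_(i < n) u m ord0 i ^+ 2 <= B) ->
  exists v : 'rV[R]_n, forall e, 0 < e -> forall N, exists m, (N <= m)%N /\
     \sum_(i < n) (u m - v) ord0 i ^+ 2 < e.
Proof.
move=> H.
pose g N := proj1_sig (cid (H N)).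
have gN N : (N <= g N)%N /\ \sum_(i < n) u (g N) ord0 i ^+ 2 <= B
  := proj2_sig (cid (H N)).
pose w j := u (g j).
pose c := B + 1.
pose K := [set v : 'rV[R]_n | forall i, `[- c, c]%classic (v ord0 i)].
have cK : compact K.
  by apply: (@rV_compact _ _ (fun=> `[- c, c]%classic)) => _; apply: segment_compact.
have FK : (w @ \oo) K.
  exists 0%N => // j _ i /=.
  have [_ hB] := gN j.
  have hi : u (g j) ord0 i ^+ 2 <= B.
    apply: le_trans hB; rewrite (bigD1 i) //= lerDl; apply: sumr_ge0 => l _; apply: sqr_ge0.
  rewrite in_itv /= /c; apply/andP; split; nra.
have [v [_ cl]] := cK _ _ FK.
exists v => e e0 N.
have en0 : 0 < e / (n%:R + 1) by apply: divr_gt0 => //; rewrite ltr_wpDl.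
pose d := Num.sqrt (e / (n%:R + 1)).
have d0 : 0 < d by rewrite sqrtr_gt0.
have [z [[j /= hj <-] hb]] := cl (w @` [set j | (N <= j)%N]) (ball v d)
   ltac:(by exists N => // j /= hj; exists j) ltac:(by apply: nbhsx_ballx).
exists (g j); split; first by apply: leq_trans hj (proj1 (gN j)).
move: hb; rewrite /ball /= => -[_ hb].
apply: (@le_lt_trans _ _ (\sum_(i < n) (e / (n%:R + 1)))).
  apply: ler_sum => i _; have := hb ord0 i; rewrite /ball /= !mxE.
  have dd : d ^+ 2 = e / (n%:R + 1) by rewrite sqr_sqrtr // ltW.
  move=> h; rewrite -dd; move: h; rewrite /w ltr_norml => /andP [h1 h2].
  apply/ltW; nra.
rewrite sumr_const card_ord -[X in X < e]mulr_natl.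
have hx : 0 <= (n%:R : R) by [].
have hx1 : (n%:R : R) + 1 != 0 by rewrite lt0r_neq0 // ltr_wpDl.
have E : (n%:R : R) * (e / (n%:R + 1)) = e - e / (n%:R + 1) by field.
rewrite E; lra.
Qed.
End BWm.


Section Fib.
Variables (R : realType) (n k : nat) (f : 'rV[R]_n -> aplane R n k).
Hypothesis hf : is_fibration f.

Lemma sqnormE (v : 'rV[R]_n) : sqnorm v = fr2 v.
Proof. by rewrite /fr2 big_ord1. Qed.

Lemma fib_same (P : aplane R n k) x : same_oplane (f x) P -> same_oplane (f P.2) P.
Proof.
case: hf => h1 [h2 _] [E2 [Qb [SQb E1]]].
have [E2' [Qa [SQa E1']]] : same_oplane (f P.2) (f x).
  apply: h2; exists P.2; split; first by case: (h1 P.2).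
  by exists 0; rewrite mul0mx addr0 E2.
split; first by rewrite -E2'.
by exists (Qb *m Qa); split; [apply: SOkM | rewrite E1 E1' mulmxA].
Qed.

Lemma fib_self x : fibers f (f x).
Proof.
split; first by case: hf => h1 _; case: (h1 x).
by exists x; split => //; exists 1%:M; split; [apply: SOk1 | rewrite mul1mx].
Qed.

Lemma closed_part : ag_closed (fibers f).
Proof.
move=> P vP H; split => //; exists P.2.
set x := P.2.
case: hf => h1 [h2 h3].
have approx : forall eps, 0 < eps -> exists Q, SOk Q /\
    fr2 (P.1 - Q *m (f x).1) < 4 * eps /\ fr2 (P.2 - (f x).2) < 4 * eps.
  move=> eps e0.
  have [d d0 hd] := h3 x eps e0.
  have [P' [[vP' [x' sP']] [Q1 [SQ1 [n1 n2]]]]] := H (Num.min eps d)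
     ltac:(by rewrite lt_min e0 d0).
  move: n1 n2; rewrite !lt_min => /andP [n1 _] /andP [n2 n2'].
  have [E2 [Q2 [SQ2 E1]]] := fib_same sP'.
  have [Q3 [SQ3 [m1 m2]]] := hd P'.2
     ltac:(by rewrite sqnormE -fr2N opprB -sqnormE).
  have T3 : Q3^T *m Q3 = 1%:M := mulmx1C (proj1 SQ3).
  have SQ : SOk (Q1 *m Q2 *m Q3^T) by apply: SOkM; [apply: SOkM | apply: SOkT].
  exists (Q1 *m Q2 *m Q3^T); split => //; split.
    have E : P.1 - Q1 *m Q2 *m Q3^T *m (f x).1 = (P.1 - Q1 *m P'.1) +
        (Q1 *m Q2 *m Q3^T) *m ((Q3 *m (f P'.2).1) - (f x).1).
      by rewrite mulmxBr E1 !mulmxA -(mulmxA (Q1 *m Q2) Q3^T Q3) T3 mulmx1 addrA subrK.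
    rewrite E; apply: le_lt_trans (fr2D _ _) _.
    rewrite fr2_mull; last by case: SQ.
    rewrite -[_ - (f x).1]opprB fr2N.
    have n1' : fr2 (P.1 - Q1 *m P'.1) < eps := n1.
    have m1' : fr2 ((f x).1 - Q3 *m (f P'.2).1) < eps := m1.
    lra.
  have E : P.2 - (f x).2 = (P.2 - P'.2) + ((f P'.2).2 - (f x).2).
    by rewrite -E2 addrA subrK.
  rewrite E; apply: le_lt_trans (fr2D _ _) _.
  rewrite -[_ - (f x).2]opprB fr2N -!sqnormE; lra.
have [Q [SQ EQ]] : exists Q, SOk Q /\ P.1 = Q *m (f x).1.
  apply: sep; [by case: (h1 x) => -[] | by case: vP | ].
  move=> e e0; have [Q [SQ [a1 _]]] := approx (e / 4) ltac:(by apply: divr_gt0).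
  by exists Q; split => //; lra.
split; last by exists Q.
apply/eqP; rewrite -subr_eq0; apply/eqP; apply: fr2_eq0.
apply/eqP; rewrite eq_le fr2_ge0 andbT; apply: small_le0 => e e0.
exists (fr2 (P.2 - (f x).2) / 4); first by lra.
have [Q' [_ [_ a2]]] := approx e e0; lra.
Qed.

Lemma unbounded_part (s : nat -> aplane R n k) : (forall m, fibers f (s m)) ->
  ~ (exists P, fibers f P /\ ag_accum s P) ->
  forall B : R, exists N, forall m, (N <= m)%N -> B < sqnorm (s m).2.
Proof.
move=> hs hn B; apply: NNPP => hN.
have H : forall N, exists m, (N <= m)%N /\ \sum_(i < n) (s m).2 ord0 i ^+ 2 <= B.
  move=> N; apply: NNPP => hN2; apply: hN; exists N => m hm.
  rewrite ltNge; apply/negP => hle; apply: hN2; exists m; split => //.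
have [v hv] := BWm.BW H.
apply: hn; exists (f v); split; first exact: fib_self.
move=> e e0 N.
case: hf => h1 [h2 h3].
have [d d0 hd] := h3 v e e0.
have [m [hm hmd]] := hv d d0 N.
exists m; split => //.
have [Q3 [SQ3 [m1 m2]]] := hd (s m).2 hmd.
have [_ [x' sx]] := hs m.
have [E2 [Q2 [SQ2 E1]]] := fib_same sx.
exists (Q3 *m Q2^T); split; first by apply: SOkM => //; apply: SOkT.
rewrite -E2 in m2; split => //.
rewrite E1 mulmxA -(mulmxA Q3) (mulmx1C (proj1 SQ2)) mulmx1 //.
Qed.

End Fib.

Theorem lemma3p2 (R : realType) (n k : nat) (f : 'rV[R]_n -> aplane R n k) :
  is_fibration f -> skew_fibration f ->
  ag_closed (fibers f) /\
  (forall s : nat -> aplane R n k, (forall m, fibers f (s m)) ->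
     ~ (exists P, fibers f P /\ ag_accum s P) ->
     forall B : R, exists N, forall m, (N <= m)%N -> B < sqnorm (s m).2).
Proof.
move=> hf _; split; [exact: closed_part | exact: unbounded_part].
Qed.
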